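(* Let $(P,\preceq)$ be a locally finite meet semilattice, $S\subseteq P$ a finite meet closed set, and suppose $x_i\in S$ generates a double-chain set in $S$, with $\mathrm{meetcl}(C_S(x_i))\setminus C_S(x_i)=A_i\cup B_i$ where $A_i,B_i$ are disjoint chains. Then there is at most one element $z\in C_S(x_i)$ that attaches to both $A_i$ and $B_i$.
   Context: $C_S(x)$ is the set of elements of $S$ covered by $x$ in $S$; $\mathrm{meetcl}(C)$ is the set of all finite meets of elements of $C$. An element $x\in S$ generates a double-chain set in $S$ if $\mathrm{meetcl}(C_S(x))\setminus C_S(x)$ is a union of two disjoint (possibly empty) chains. Given such chains $A_i,B_i$ for $x_i$, an element $z\in C_S(x_i)$ attaches to $A_i$ (resp. $B_i$) if there is $a\in A_i$ (resp. $b\in B_i$) that is covered by $z$ in the poset $\mathrm{meetcl}(C_S(x_i))$. *)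

(* Defs.v *)
From mathcomp Require Import all_boot all_order.
Set Implicit Arguments. Unset Strict Implicit. Unset Printing Implicit Defensive.
Import Order.Theory.
Local Open Scope order_scope.

Section Defs.
Context {d : Order.disp_t} {T : meetSemilatticeType d}.

Definition locally_finite : Prop :=
  forall a b : T, exists s : seq T, forall y : T, a <= y -> y <= b -> y \in s.

Definition finite_set (S : T -> Prop) : Prop :=
  exists s : seq T, forall y, S y -> y \in s.

Definition meet_closed_set (S : T -> Prop) : Prop :=
  forall a b, S a -> S b -> S (a `&` b).

Definition covered_in (Q : T -> Prop) (y x : T) : Prop :=
  Q y /\ Q x /\ y < x /\ ~ (exists q, Q q /\ y < q /\ q < x).

Definition covset (S : T -> Prop) (x : T) : T -> Prop :=
  fun y => covered_in S y x.

Definition meetcl (C : T -> Prop) : T -> Prop :=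
  fun y => exists (x0 : T) (s : seq T),
    C x0 /\ (forall c, c \in s -> C c) /\ y = foldl Order.meet x0 s.

Definition is_chain (A : T -> Prop) : Prop :=
  forall a b, A a -> A b -> (a <= b) || (b <= a).

Definition attaches (S : T -> Prop) (x : T) (A : T -> Prop) (z : T) : Prop :=
  exists a, A a /\ covered_in (meetcl (covset S x)) a z.

End Defs.

(* Main.v *)
Require Import Defs.
From mathcomp Require Import all_boot all_order.
Import Order.Theory.
Local Open Scope order_scope.

Lemma cov_eq (d : Order.disp_t) (T : meetSemilatticeType d) (Q : T -> Prop) (a z m : T) :
  covered_in Q a z -> Q m -> m < z -> a <= m -> a = m.
Proof.
move=> [_ [_ [_ H]]] Qm mz.
rewrite le_eqVlt => /orP [/eqP -> //| am].
by exfalso; apply: H; exists m.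
Qed.

Lemma cov_le (d : Order.disp_t) (T : meetSemilatticeType d) (S : T -> Prop) (x z1 z2 : T) :
  covset S x z1 -> covset S x z2 -> z1 <= z2 -> z1 = z2.
Proof.
move=> [S1 [_ [_ H1]]] [S2 [_ [z2x _]]].
rewrite le_eqVlt => /orP [/eqP -> //| lt12].
by exfalso; apply: H1; exists z2.
Qed.

Theorem lemma2p3 (d : Order.disp_t) (T : meetSemilatticeType d)
  (S : T -> Prop) (x : T) (A B : T -> Prop) :
  locally_finite (T := T) ->
  finite_set S -> meet_closed_set S -> S x ->
  is_chain A -> is_chain B ->
  (forall y, ~ (A y /\ B y)) ->
  (forall y, (meetcl (covset S x) y /\ ~ covset S x y) <-> (A y \/ B y)) ->
  forall z1 z2 : T,
    covset S x z1 -> attaches S x A z1 -> attaches S x B z1 ->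
    covset S x z2 -> attaches S x A z2 -> attaches S x B z2 ->
    z1 = z2.
Proof.
move=> _ _ _ _ chA chB disj _ z1 z2 c1 [a1 [Aa1 ca1]] [b1 [Bb1 cb1]]
  c2 [a2 [Aa2 ca2]] [b2 [Bb2 cb2]].
case: (boolP (z1 <= z2)) => [le12|n12]; first exact: cov_le c1 c2 le12.
case: (boolP (z2 <= z1)) => [le21|n21]; first by symmetry; exact: cov_le c2 c1 le21.
set m := z1 `&` z2.
have Mm : meetcl (covset S x) m by exists z1, [:: z2]; split=> //; split=> // c; rewrite inE => /eqP ->.
have m1 : m < z1 by rewrite lt_neqAle leIl andbT; apply/eqP => /meet_idPl; apply/negP: n12.
have m2 : m < z2 by rewrite lt_neqAle leIr andbT; apply/eqP => /meet_idPr; apply/negP: n21.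
have gen : forall (C : T -> Prop), is_chain C -> forall u v, C u -> C v ->
    covered_in (meetcl (covset S x)) u z1 -> covered_in (meetcl (covset S x)) v z2 -> C m.
  move=> C chC u v Cu Cv cu cv.
  have uz1 : u <= z1 by case: cu => [_ [_ [/ltW h _]]].
  have vz2 : v <= z2 by case: cv => [_ [_ [/ltW h _]]].
  case/orP: (chC u v Cu Cv) => [uv|vu].
    have um : u <= m by rewrite lexI uz1 (le_trans uv vz2).
    by rewrite -(@cov_eq _ _ _ _ _ _ cu Mm m1 um).
  have vm : v <= m by rewrite lexI vz2 (le_trans vu uz1).
  by rewrite -(@cov_eq _ _ _ _ _ _ cv Mm m2 vm).
exfalso; apply: (disj m); split.
  exact: (gen A chA a1 a2).
exact: (gen B chB b1 b2).
Qed.
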